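(* Let $n\ge 2$, $m\ge1$, and let $T_{ij}\in\mathbb R^{m\times m}$ ($i,j\in\{1,\dots,n\}$) be similarity matrices with $T_{ij}=T_{ji}^\top$. Suppose that for every pair $i,j$ the maximization $\max_{P\in\mathcal P_m}\operatorname{tr}(P^\top T_{ij})$ has a unique maximizer $P_{ij}$, and that $P_{ij}P_{jk}=P_{ik}$ for all $i,j,k$. Then Algorithm 2 (with either Prim's or Kruskal's edge order, any initial permutation matrices, and any terminating sequence of inner coordinate updates) outputs $A_1,\dots,A_n$ attaining $\max_{A_1,\dots,A_n\in\mathcal P_m}\sum_{i=1}^n\sum_{j=1}^n\operatorname{tr}(A_iT_{ij}A_j^\top)$.
   Context: $\mathcal P_m$ denotes the set of $m\times m$ permutation matrices; $f(T_{ij}):=\max_{P\in\mathcal P_m}\operatorname{tr}(P^\top T_{ij})$. Algorithm 2: (1) Form the complete undirected graph $G$ on vertices $v_1,\dots,v_n$ where edge $(v_i,v_j)$, $i\ne j$, has weight $f(T_{ij})$, and compute a Maximum Spanning Tree with edge set $E'$. (2) Order the edges of $E'$ either in Prim's order (the order in which Prim's algorithm adds them, so that each processed edge joins exactly one new vertex to the current tree) or in Kruskal's order (decreasing weight). (3) Set $S_i\leftarrow\{v_i\}$ and initialize each $A_i$ arbitrarily in $\mathcal P_m$. (4) For each edge $(v_i,v_j)\in E'$ in that order: compute $\hat P=\arg\max_{P\in\mathcal P_m}\operatorname{tr}(P^\top A_iT_{ij}A_j^\top)$; set $A_{j'}\leftarrow\hat PA_{j'}$ for all $v_{j'}\in S_j$;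 let $S'=S_i\cup S_j$ and set $S_k\leftarrow S'$ for all $v_k\in S'$; then repeatedly pick $v_k\in S'$ and replace $A_k$ by a maximizer $\arg\max_{P\in\mathcal P_m}\operatorname{tr}\big(P^\top\sum_{v_{k'}\in S',\,k'\ne k}A_{k'}T_{kk'}\big)$ until convergence. The output is the final $A_1,\dots,A_n$. *)

(* Defs.v *)
From HB Require Import structures.
From mathcomp Require Import all_boot all_order all_algebra all_fingroup.
Set Implicit Arguments. Unset Strict Implicit. Unset Printing Implicit Defensive.
Import Order.TTheory GRing.Theory Num.Theory.
Local Open Scope ring_scope.

Section AlgDefs.
Variables (R : realFieldType) (n m : nat).
Variable T : 'I_n -> 'I_n -> 'M[R]_m.

Definition is_max_perm (M P : 'M[R]_m) : Prop :=
  is_perm_mx P /\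
  forall Q : 'M[R]_m, is_perm_mx Q -> \tr (Q^T *m M) <= \tr (P^T *m M).

(* f(M) = max_{P in P_m} tr(P^T M); the identity is a valid start value. *)
Definition fval (M : 'M[R]_m) : R :=
  \big[Num.max/(\tr M)]_(s : 'S_m) \tr ((perm_mx s)^T *m M).

Definition wt (e : 'I_n * 'I_n) : R := fval (T e.1 e.2).

Definition edge_rel (E : seq ('I_n * 'I_n)) : rel 'I_n :=
  fun u v => has (fun e => ((e.1 == u) && (e.2 == v)) || ((e.1 == v) && (e.2 == u))) E.

Definition spanning_tree (E : seq ('I_n * 'I_n)) : Prop :=
  size E = n.-1 /\ all (fun e => e.1 != e.2) E /\
  forall u v, connect (edge_rel E) u v.

Definition tree_weight (E : seq ('I_n * 'I_n)) : R := \sum_(e <- E) wt e.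

Definition max_spanning_tree (E : seq ('I_n * 'I_n)) : Prop :=
  spanning_tree E /\
  forall E', spanning_tree E' -> tree_weight E' <= tree_weight E.

(* Prim's order: starting from a root r, each edge joins exactly one new vertex
   to the current tree. *)
Definition prim_order (E : seq ('I_n * 'I_n)) : Prop :=
  exists r : 'I_n, forall t, (t < size E)%N ->
    let e := nth (r, r) E t in
    let V := r |: [set v | has (fun e' => (e'.1 == v) || (e'.2 == v)) (take t E)] in
    (e.1 \in V) != (e.2 \in V).

Definition kruskal_order (E : seq ('I_n * 'I_n)) : Prop :=
  sorted (fun e1 e2 => wt e2 <= wt e1) E.

Definition upd (A : 'I_n -> 'M[R]_m) (k : 'I_n) (M : 'M[R]_m) : 'I_n -> 'M[R]_m :=
  fun k' => if k' == k then M else A k'.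

Definition inner_update (Sp : {set 'I_n}) (A A' : 'I_n -> 'M[R]_m) : Prop :=
  exists k, k \in Sp /\
    exists P, is_max_perm (\sum_(k' in Sp | k' != k) (A k' *m T k' k)) P /\
      A' = upd A k P.

Inductive inner_run (Sp : {set 'I_n}) : ('I_n -> 'M[R]_m) -> ('I_n -> 'M[R]_m) -> Prop :=
  | inner_stop A : inner_run Sp A A
  | inner_step A A1 A2 : inner_update Sp A A1 -> inner_run Sp A1 A2 -> inner_run Sp A A2.

Inductive alg_run : seq ('I_n * 'I_n) -> ('I_n -> 'M[R]_m) -> ('I_n -> {set 'I_n}) ->
                    ('I_n -> 'M[R]_m) -> Prop :=
  | run_nil A S : alg_run [::] A S A
  | run_cons (i j : 'I_n) E A S (Phat : 'M[R]_m) A2 A3 :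
      is_max_perm (A i *m T i j *m (A j)^T) Phat ->
      inner_run (S i :|: S j) (fun k => if k \in S j then Phat *m A k else A k) A2 ->
      alg_run E A2 (fun k => if k \in S i :|: S j then S i :|: S j else S k) A3 ->
      alg_run ((i, j) :: E) A S A3.

Definition objective (A : 'I_n -> 'M[R]_m) : R :=
  \sum_(i < n) \sum_(j < n) \tr (A i *m T i j *m (A j)^T).

End AlgDefs.

(* Main.v *)
Require Import Defs.
From HB Require Import structures.
From mathcomp Require Import all_boot all_order all_algebra all_fingroup.
Import Order.TTheory GRing.Theory Num.Theory.
Local Open Scope ring_scope.
Set Implicit Arguments. Unset Strict Implicit. Unset Printing Implicit Defensive.

Lemma permTK (R : realFieldType) m (P : 'M[R]_m) : is_perm_mx P -> P^T *m P = 1%:M.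
Proof. by case/is_perm_mxP=> s ->; rewrite tr_perm_mx -perm_mxM mulVg perm_mx1. Qed.

Lemma permKT (R : realFieldType) m (P : 'M[R]_m) : is_perm_mx P -> P *m P^T = 1%:M.
Proof. by case/is_perm_mxP=> s ->; rewrite tr_perm_mx -perm_mxM mulgV perm_mx1. Qed.

Lemma Pc_bound (R : realFieldType) n m (T : 'I_n -> 'I_n -> 'M[R]_m) Pc
  (HP : forall i j, is_max_perm (T i j) (Pc i j) /\
               forall Q, is_max_perm (T i j) Q -> Q = Pc i j) i j Q :
  is_perm_mx Q -> \tr (Q^T *m T i j) <= \tr ((Pc i j)^T *m T i j).
Proof. by move=> HQ; case: (HP i j) => [[_ H] _]; apply: H. Qed.

Lemma Pc_uniq (R : realFieldType) n m (T : 'I_n -> 'I_n -> 'M[R]_m) Pc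
  (HP : forall i j, is_max_perm (T i j) (Pc i j) /\
               forall Q, is_max_perm (T i j) Q -> Q = Pc i j) i j Q :
  is_perm_mx Q -> \tr ((Pc i j)^T *m T i j) <= \tr (Q^T *m T i j) -> Q = Pc i j.
Proof.
move=> HQ Hle; case: (HP i j) => [[_ H] U]; apply: U; split=> // Q' HQ'.
exact: le_trans (H _ HQ') Hle.
Qed.

Lemma Pc_perm (R : realFieldType) n m (T : 'I_n -> 'I_n -> 'M[R]_m) Pc
  (HP : forall i j, is_max_perm (T i j) (Pc i j) /\
               forall Q, is_max_perm (T i j) Q -> Q = Pc i j) i j :
  is_perm_mx (Pc i j).
Proof. by case: (HP i j) => [[]]. Qed.

Lemma Pc_diag (R : realFieldType) n m (T : 'I_n -> 'I_n -> 'M[R]_m) Pc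
  (HP : forall i j, is_max_perm (T i j) (Pc i j) /\
               forall Q, is_max_perm (T i j) Q -> Q = Pc i j)
  (HC : forall i j k, Pc i j *m Pc j k = Pc i k) i :
  Pc i i = 1%:M.
Proof.
have := HC i i i; move=> /(congr1 (mulmx (Pc i i)^T)).
by rewrite mulmxA (permTK (Pc_perm HP _ _)) mul1mx => ->.
Qed.

Lemma Pc_tr (R : realFieldType) n m (T : 'I_n -> 'I_n -> 'M[R]_m) Pc
  (HP : forall i j, is_max_perm (T i j) (Pc i j) /\
               forall Q, is_max_perm (T i j) Q -> Q = Pc i j)
  (HC : forall i j k, Pc i j *m Pc j k = Pc i k) i j :
  (Pc i j)^T = Pc j i.
Proof.
have := HC i j i; rewrite (Pc_diag HP HC) => /(congr1 (mulmx (Pc i j)^T)).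
by rewrite mulmxA (permTK (Pc_perm HP _ _)) mul1mx mulmx1 => ->.
Qed.

Lemma tr_id (R : realFieldType) m (Q B M : 'M[R]_m) :
  \tr (Q^T *m (B *m M)) = \tr ((B^T *m Q)^T *m M).
Proof. by rewrite trmx_mul trmxK mulmxA. Qed.

Lemma inner_upd_inv (R : realFieldType) n m (T : 'I_n -> 'I_n -> 'M[R]_m) Pc
  (HP : forall i j, is_max_perm (T i j) (Pc i j) /\
               forall Q, is_max_perm (T i j) Q -> Q = Pc i j)
  (HC : forall i j k, Pc i j *m Pc j k = Pc i k) Sp A A1 :
  inner_update T Sp A A1 ->
  (forall a, is_perm_mx (A a)) ->
  (forall a b, a \in Sp -> b \in Sp -> (A a)^T *m A b = Pc a b) ->
  [/\ forall a, is_perm_mx (A1 a),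
      forall a b, a \in Sp -> b \in Sp -> (A1 a)^T *m A1 b = Pc a b &
      forall k, k \notin Sp -> A1 k = A k].
Proof.
move=> [k [kS [P [[HPp HPmax] ->]]]] Hperm Hcons.
set X := fun k' => A k' *m T k' k.
have trS : forall Q : 'M[R]_m, \tr (Q^T *m \sum_(k' in Sp | k' != k) X k') =
    \sum_(k' in Sp | k' != k) \tr (Q^T *m X k').
  by move=> Q; rewrite mulmx_sumr; apply: raddf_sum.
have key : forall k', k' \in Sp -> k' != k -> (A k')^T *m P = Pc k' k.
  set f := fun k' => \tr ((A k)^T *m X k') - \tr (P^T *m X k').
  have f0 : forall k', (k' \in Sp) && (k' != k) -> 0 <= f k'.
    move=> k' /andP[k'S _]; rewrite /f subr_ge0 /X !tr_id (Hcons k' k) //.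
    apply: (Pc_bound HP).
    by rewrite is_perm_mxMl ?is_perm_mx_tr.
  have sum0 : \sum_(k' in Sp | k' != k) f k' = 0.
    apply/eqP; rewrite eq_le sumr_ge0 // andbT.
    rewrite /f sumrB -!trS subr_le0; exact: HPmax.
  move=> k' k'S k'k.
  have Hz : forall i, (i \in Sp) && (i != k) -> f i = 0.
    by apply/(psumr_eq0P f0).
  have := Hz k'; rewrite k'S k'k => /(_ isT).
  move/eqP; rewrite /f subr_eq0 /X !tr_id (Hcons k' k) // => /eqP Heq.
  apply: (Pc_uniq HP); first by rewrite is_perm_mxMl ?is_perm_mx_tr.
  by rewrite Heq.
split.
- by move=> a; rewrite /upd; case: ifP.
- move=> a b aS bS; rewrite /upd.
  case: (eqVneq a k) => [->|ak]; case: (eqVneq b k) => [->|bk];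
    rewrite ?eqxx ?(negbTE ak) ?(negbTE bk).
  + by rewrite (permTK HPp) (Pc_diag HP HC).
  + by have := key b bS bk; move/(congr1 trmx); rewrite trmx_mul trmxK (Pc_tr HP HC).
  + exact: key.
  + exact: Hcons.
- by move=> k' k'S; rewrite /upd; case: eqP => // Ek; rewrite Ek kS in k'S.
Qed.

Lemma inner_inv (R : realFieldType) n m (T : 'I_n -> 'I_n -> 'M[R]_m) Pc
  (HP : forall i j, is_max_perm (T i j) (Pc i j) /\
               forall Q, is_max_perm (T i j) Q -> Q = Pc i j)
  (HC : forall i j k, Pc i j *m Pc j k = Pc i k) Sp A A2 :
  inner_run T Sp A A2 ->
  (forall a, is_perm_mx (A a)) ->
  (forall a b, a \in Sp -> b \in Sp -> (A a)^T *m A b = Pc a b) ->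
  [/\ forall a, is_perm_mx (A2 a),
      forall a b, a \in Sp -> b \in Sp -> (A2 a)^T *m A2 b = Pc a b &
      forall k, k \notin Sp -> A2 k = A k].
Proof.
elim=> [A0|A0 A1 A3 Hu _ IH] Hp Hc; first by split.
have [Hp1 Hc1 Hk1] := inner_upd_inv HP HC Hu Hp Hc.
have [Hp3 Hc3 Hk3] := IH Hp1 Hc1.
by split=> // k kS; rewrite Hk3 // Hk1.
Qed.

Lemma tr_cyc (R : realFieldType) m (Q B M C : 'M[R]_m) :
  \tr (Q^T *m (B *m M *m C^T)) = \tr ((B^T *m Q *m C)^T *m M).
Proof.
rewrite !trmx_mul !trmxK !mulmxA mxtrace_mulC !mulmxA; congr (\tr _).
Qed.

Lemma run_inv (R : realFieldType) n m (T : 'I_n -> 'I_n -> 'M[R]_m) Pc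
  (HP : forall i j, is_max_perm (T i j) (Pc i j) /\
               forall Q, is_max_perm (T i j) Q -> Q = Pc i j)
  (HC : forall i j k, Pc i j *m Pc j k = Pc i k) E A S A3 :
  alg_run T E A S A3 ->
  (forall a, a \in S a) -> (forall a b, b \in S a -> S b = S a) ->
  (forall a, is_perm_mx (A a)) ->
  (forall a b, b \in S a -> (A a)^T *m A b = Pc a b) ->
  exists S3 : 'I_n -> {set 'I_n},
    [/\ forall a, is_perm_mx (A3 a), forall a b, b \in S3 a -> S3 b = S3 a,
     forall a b, b \in S3 a -> (A3 a)^T *m A3 b = Pc a b,
     forall a b, b \in S a -> b \in S3 a &
     forall e, e \in E -> e.2 \in S3 e.1].
Proof.
elim=> [A0 S0 | i j E0 A0 S0 Phat A2 A3' Hmax Hin Hrun IH] S1 S2 Hp Hc.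
  by exists S0; split.
set Sp := S0 i :|: S0 j.
set S' := fun k => if k \in Sp then Sp else S0 k.
set A1 := fun k => if k \in S0 j then Phat *m A0 k else A0 k.
have HPh : is_perm_mx Phat by case: Hmax.
have HQ : (A0 i)^T *m Phat *m A0 j = Pc i j.
  apply: (Pc_uniq HP).
    by rewrite is_perm_mxMr // is_perm_mxMl // is_perm_mx_tr.
  rewrite -tr_cyc; case: Hmax => _ /(_ (A0 i *m Pc i j *m (A0 j)^T)).
  rewrite !tr_cyc !mulmxA (permTK (Hp i)) mul1mx -[Pc i j *m _ *m _]mulmxA (permTK (Hp j)) mulmx1.
  apply; rewrite is_perm_mxMr ?is_perm_mx_tr // is_perm_mxMl //.
  exact: (Pc_perm HP).
have inSp : forall a b, a \in Sp -> b \in S0 a -> b \in Sp.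
  move=> a b; rewrite !in_setU => /orP[] aS bS.
    by rewrite -(S2 _ _ aS) bS.
  by rewrite -(S2 _ _ aS) bS orbT.
have S'1 : forall a, a \in S' a.
  by move=> a; rewrite /S'; case: ifP.
have S'2 : forall a b, b \in S' a -> S' b = S' a.
  move=> a b; rewrite /S'; case: ifP => aS bS.
    by rewrite bS.
  case: ifP => bSp; last exact: S2.
  have := S2 _ _ bS => Eb.
  move: bSp; rewrite !in_setU => /orP[] bS'.
    have : a \in Sp by rewrite in_setU -(S2 _ _ bS') Eb S1.
    by rewrite aS.
  have : a \in Sp by rewrite in_setU -(S2 _ _ bS') Eb S1 orbT.
  by rewrite aS.
have grow : forall a b, b \in S0 a -> b \in S' a.
  move=> a b bS; rewrite /S'; case: ifP => // aS; exact: inSp aS bS.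
have cross : forall a b, a \in S0 i -> b \in S0 j ->
    (A0 a)^T *m Phat *m A0 b = Pc a b.
  move=> a b aS bS.
  have <- : ((A0 a)^T *m A0 i) *m ((A0 i)^T *m Phat *m A0 j) *m ((A0 j)^T *m A0 b)
      = (A0 a)^T *m Phat *m A0 b.
    rewrite !mulmxA -[(A0 a)^T *m A0 i *m (A0 i)^T]mulmxA (permKT (Hp i)) mulmx1.
    by rewrite -[_ *m A0 j *m (A0 j)^T]mulmxA (permKT (Hp j)) mulmx1.
  rewrite HQ (Hc a i); last by rewrite (S2 _ _ aS) S1.
  by rewrite (Hc j b) // !HC.
have HpA1 : forall a, is_perm_mx (A1 a).
  by move=> a; rewrite /A1; case: ifP => _ //; rewrite is_perm_mxMl.
have HcA1 : forall a b, a \in Sp -> b \in Sp -> (A1 a)^T *m A1 b = Pc a b.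
  move=> a b aS bS; rewrite /A1.
  case: ifP => aj; case: ifP => bj.
  - rewrite trmx_mul -mulmxA [Phat^T *m _]mulmxA (permTK HPh) mul1mx.
    by apply: Hc; rewrite (S2 _ _ aj).
  - have bi : b \in S0 i by move: bS; rewrite in_setU bj orbF.
    rewrite trmx_mul -mulmxA; have := congr1 trmx (cross b a bi aj).
    by rewrite !trmx_mul trmxK (Pc_tr HP HC) => <-.
  - have ai : a \in S0 i by move: aS; rewrite in_setU aj orbF.
    by rewrite mulmxA cross.
  - have ai : a \in S0 i by move: aS; rewrite in_setU aj orbF.
    have bi : b \in S0 i by move: bS; rewrite in_setU bj orbF.
    by apply: Hc; rewrite (S2 _ _ ai).
have [Hp2 Hc2 Hk2] := inner_inv HP HC Hin HpA1 HcA1.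
have Hc2' : forall a b, b \in S' a -> (A2 a)^T *m A2 b = Pc a b.
  move=> a b; rewrite /S'; case: ifP => aS bS; first exact: Hc2.
  have bS' : b \notin Sp.
    apply/negP => bSp; have := inSp _ a bSp.
    by rewrite (S2 _ _ bS) S1 aS => /(_ isT).
  rewrite !Hk2 ?aS //  /A1.
  have -> : (a \in S0 j) = false by apply/negbTE; apply: (contraFN _ aS) => H; rewrite in_setU H orbT.
  have -> : (b \in S0 j) = false by apply/negbTE; apply: (contraNN _ bS') => H; rewrite in_setU H orbT.
  exact: Hc.
have [S3 [H0 H1 H2 H3 H4]] := IH S'1 S'2 Hp2 Hc2'.
exists S3; split=> //.
  by move=> a b bS; apply: H3; apply: grow.
move=> e; rewrite in_cons => /orP[/eqP -> /=|]; last exact: H4.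
by apply: H3; rewrite /S' in_setU S1 /= in_setU S1 orbT.
Qed.

Theorem theorem3 (R : realFieldType) (n m : nat) (T : 'I_n -> 'I_n -> 'M[R]_m)
  (Pc : 'I_n -> 'I_n -> 'M[R]_m) :
  (2 <= n)%N -> (1 <= m)%N ->
  (forall i j, T i j = (T j i)^T) ->
  (forall i j, is_max_perm (T i j) (Pc i j) /\
               forall Q, is_max_perm (T i j) Q -> Q = Pc i j) ->
  (forall i j k, Pc i j *m Pc j k = Pc i k) ->
  forall E : seq ('I_n * 'I_n),
  max_spanning_tree T E -> prim_order E \/ kruskal_order T E ->
  forall A0 : 'I_n -> 'M[R]_m, (forall i, is_perm_mx (A0 i)) ->
  forall A : 'I_n -> 'M[R]_m, alg_run T E A0 (fun i => [set i]) A ->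
  (forall i, is_perm_mx (A i)) /\
  (forall B : 'I_n -> 'M[R]_m, (forall i, is_perm_mx (B i)) ->
     objective T B <= objective T A).
Proof.
move=> _ _ _ HP HC E [[_ [_ Hconn]] _] _ A0 HA0 A Hrun.
have s1 : forall a : 'I_n, a \in [set a] by move=> a; rewrite set11.
have s2 : forall a b : 'I_n, b \in [set a] -> [set b] = [set a] by move=> a b /set1P ->.
have s3 : forall a b : 'I_n, b \in [set a] -> (A0 a)^T *m A0 b = Pc a b.
  by move=> a b /set1P ->; rewrite (permTK (HA0 a)) (Pc_diag HP HC).
have [S3 [H0 H1 H2 H3 H4]] := run_inv HP HC Hrun s1 s2 HA0 s3.
have all3 : forall u v, v \in S3 u.
  move=> u v; case/connectP: (Hconn u v) => p pth ->{v}.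
  elim: p u pth => [|x p IHp] u /=; first by move=> _; exact: H3 (s1 u).
  case/andP=> Hux /IHp Hx; rewrite -(H1 u x) //.
  case/hasP: Hux => e eE /orP[/andP[/eqP e1 /eqP e2]|/andP[/eqP e1 /eqP e2]].
    by have := H4 e eE; rewrite e1 e2.
  by have := H4 e eE; rewrite e1 e2 => /H1 ->; exact: H3 (s1 x).
split=> // B HB.
rewrite /objective; apply: ler_sum => i _; apply: ler_sum => j _.
rewrite mxtrace_mulC [X in _ <= X]mxtrace_mulC !tr_id H2 //.
apply: (Pc_bound HP); rewrite is_perm_mxMl ?is_perm_mx_tr //.
Qed.
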